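(* Let $D$ be an infinite alphabet. A language $L$ of finite words over $D$ is recognised by some (original) two-way $k$-register automaton for some $k$ if and only if it is recognised by some modified two-way $k'$-register automaton for some $k'$. That is, the original and the modified models of two-way register automata over an infinite alphabet have the same recognising power.
   Context: An (original) non-deterministic two-way $k$-register automaton over an infinite alphabet $D$ is a tuple $(Q,q_0,F,\tau_0,P)$ where $Q$ is a finite set of states, $q_0\in Q$ is the initial state, $F\subseteq Q$ is the set of final states, $\tau_0:\{1,\dots,k\}\to D\cup\{\triangleright,\triangleleft\}$ is the initial register assignment, and $P$ is a finite set of transitions of the forms: (1) $(i,q)\to(q',d)$: if the current state is $q$ and the observed symbol equals the value in register $i$, enter state $q'$ and move in direction $d$; (2) $q\to(q',i,d)$: if the current state is $q$ and the observed symbol is different from all values held in the registers, enter state $q'$, copy the current symbol into register $i$, and move in direction $d$. Here $i\in\{1,\dots,k\}$, $q,q'\in Q$, $d\in\{\mathrm{stay},\mathrm{left},\mathrm{right}\}$. The input word is written on a read-only tape delimited by $\triangleright$ and $\triangleleft$; the automaton starts in $q_0$ at the first letter, applies non-deterministically any applicable transitions, and accepts if it can ever reach a state in $F$; the recognised language is the set of accepted words. A modified two-way $k$-register automaton additionally allows transitions of the forms: (3) $(i,q)\to(q',j,d)$: if the current state is $q$ and the observed symbol equals the value in register $i$, enter $q'$, copy the current symbol into register $j$ and move in direction $d$; (4) $q\to(q',d)$: if the current state is $q$ and the observed symbol is different from all register values, enter $q'$ and move in direction $d$ (without storing). In particular, in the modified model the same value may be held in several registers. *)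

(* Defs.v *)
From Stdlib Require Import Relations List.
From mathcomp Require Import all_boot.

Set Implicit Arguments.
Unset Strict Implicit.
Unset Printing Implicit Defensive.

Definition infinite_alphabet (D : Type) : Prop :=
  forall (n : nat) (f : 'I_n -> D), exists x : D, forall i, f i <> x.

Inductive tsym (D : Type) : Type :=
  | Sym of D
  | LEnd
  | REnd.
Arguments LEnd {D}.
Arguments REnd {D}.

Inductive dir : Type := Stay | Left | Right.

(* TEq i q q' d      : (i,q) -> (q',d)        (type 1)
   TNew q q' i d     : q -> (q',i,d)          (type 2)
   TEqStore i q q' j d : (i,q) -> (q',j,d)    (type 3, modified model only)
   TNewSkip q q' d   : q -> (q',d)            (type 4, modified model only) *)
Inductive trans (k : nat) (Q : Type) : Type :=
  | TEq of 'I_k & Q & Q & dir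
  | TNew of Q & Q & 'I_k & dir
  | TEqStore of 'I_k & Q & Q & 'I_k & dir
  | TNewSkip of Q & Q & dir.

Record RA (D : Type) (k : nat) (Q : finType) : Type := mkRA {
  q_init : Q;
  final : pred Q;
  tau_init : 'I_k -> tsym D;
  trans_set : seq (trans k Q)
}.

Definition is_original_trans k (Q : Type) (t : trans k Q) : bool :=
  match t with TEq _ _ _ _ | TNew _ _ _ _ => true | _ => false end.

Definition original D k (Q : finType) (A : RA D k Q) : Prop :=
  all (@is_original_trans k Q) (trans_set A).

(* Tape contents for word w: position 0 holds |>, positions 1..size w hold
   the letters, position size w + 1 holds <|. *)
Definition tape_at D (w : seq D) (p : nat) : tsym D :=
  match p with
  | 0 => LEnd
  | p'.+1 => match drop p' w with x :: _ => Sym x | [::] => REnd end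
  end.

Definition move D (w : seq D) (d : dir) (p p' : nat) : Prop :=
  match d with
  | Stay => p' = p
  | Left => p' + 1 = p
  | Right => p' = p + 1 /\ p' <= size w + 1
  end.

Definition upd D k (tau : 'I_k -> tsym D) (i : 'I_k) (a : tsym D) :
  'I_k -> tsym D := fun j => if j == i then a else tau j.

Definition fresh D k (tau : 'I_k -> tsym D) (a : tsym D) : Prop :=
  forall j, tau j <> a.

Definition conf D k (Q : Type) := (Q * nat * ('I_k -> tsym D))%type.

Definition fires D k (Q : Type) (w : seq D) (t : trans k Q)
  (c c' : conf D k Q) : Prop :=
  let: (q, p, tau) := c in
  let: (q', p', tau') := c' in
  let a := tape_at w p in
  match t with
  | TEq i q0 q1 d =>
      q = q0 /\ tau i = a /\ q' = q1 /\ move w d p p' /\ tau' = tau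
  | TNew q0 q1 i d =>
      q = q0 /\ fresh tau a /\ q' = q1 /\ move w d p p' /\ tau' = upd tau i a
  | TEqStore i q0 q1 j d =>
      q = q0 /\ tau i = a /\ q' = q1 /\ move w d p p' /\ tau' = upd tau j a
  | TNewSkip q0 q1 d =>
      q = q0 /\ fresh tau a /\ q' = q1 /\ move w d p p' /\ tau' = tau
  end.

Definition step D k (Q : finType) (A : RA D k Q) (w : seq D)
  (c c' : conf D k Q) : Prop :=
  exists t, List.In t (trans_set A) /\ fires w t c c'.

Definition accepts D k (Q : finType) (A : RA D k Q) (w : seq D) : Prop :=
  exists c : conf D k Q,
    clos_refl_trans (conf D k Q) (step A w) (q_init A, 1, tau_init A) c
    /\ final A c.1.1.

(* Main.v *)
Require Import Defs.
From Stdlib Require Import ClassicalEpsilon Classical List Relations.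
From HB Require Import structures.
From mathcomp Require Import all_boot.

Set Implicit Arguments.
Unset Strict Implicit.
Unset Printing Implicit Defensive.

Definition teq (D : Type) (x y : tsym D) : bool :=
  if excluded_middle_informative (x = y) then true else false.
Lemma teqP (D : Type) : Equality.axiom (@teq D).
Proof. move=> x y; rewrite /teq; case: excluded_middle_informative => h; by constructor. Qed.
Definition ctsym (D : Type) := tsym D.
HB.instance Definition _ (D : Type) := hasDecEq.Build (ctsym D) (@teqP D).

Lemma memIn (T : eqType) (x : T) (s : seq T) : x \in s -> In x s.
Proof. elim: s => //= y s IH; rewrite in_cons => /orP [/eqP ->|/IH]; auto. Qed.

Lemma fresh_list (D : Type) (HD : infinite_alphabet D) (s : seq (ctsym D)) m :
  uniq s -> exists fr : seq (ctsym D), size fr = m /\ uniq (s ++ fr).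
Proof.
move=> us.
have [d _] := HD 0 (fun i : 'I_0 => ltac:(case: i => m'; by rewrite ltn0)).
elim: m => [|m [fr [sz u]]]; first by exists [::]; rewrite cats0.
pose uu := s ++ fr.
pose unsym (t : tsym D) := match t with Sym y => y | _ => d end.
have [x Hx] := HD (size uu) (fun i => unsym (nth LEnd uu i)).
exists (rcons fr (Sym x : ctsym D)); split; first by rewrite size_rcons sz.
rewrite -rcons_cat rcons_uniq u andbT.
apply/negP => Hin.
have Hi : index (Sym x : ctsym D) uu < size uu by rewrite index_mem.
apply: (Hx (Ordinal Hi)) => /=.
by rewrite (nth_index _ Hin).
Qed.

Lemma init_ex (D : Type) (HD : infinite_alphabet D) k (g : 'I_k -> tsym D) :
  exists (f : 'I_k.+1 -> tsym D) (s : 'I_k -> 'I_k.+1),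
    injective f /\ forall l, g l = f (s l).
Proof.
pose s : seq (ctsym D) := undup [seq (g l : ctsym D) | l <- enum 'I_k].
have us : uniq s by apply: undup_uniq.
have szs : size s <= k.
  by rewrite (leq_trans (size_undup _)) // size_map size_enum_ord.
have [fr [sz u]] := fresh_list HD k.+1 us.
pose uu := s ++ fr.
have szu : k.+1 <= size uu by rewrite size_cat sz leq_addl.
exists (fun r : 'I_k.+1 => nth (LEnd : ctsym D) uu r).
exists (fun l => inord (index (g l : ctsym D) s)).
split.
  move=> x y E.
  have : (nth (LEnd : ctsym D) uu x == nth (LEnd : ctsym D) uu y) by apply/eqP.
  rewrite nth_uniq //.
  - by move/eqP/val_inj.
  - exact: leq_trans (ltn_ord x) szu.
  - exact: leq_trans (ltn_ord y) szu.
move=> l.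
have Hm : (g l : ctsym D) \in s by rewrite mem_undup; apply: map_f; rewrite mem_enum.
have Hi : index (g l : ctsym D) s < size s by rewrite index_mem.
rewrite inordK; last exact: leq_trans Hi (leq_trans szs _).
by rewrite nth_cat Hi nth_index.
Qed.
Lemma free_reg k (s : {ffun 'I_k -> 'I_k.+1}) : exists r, r \notin codom s.
Proof.
apply/existsP; apply: contraT; rewrite negb_exists => /forallP H.
have : #|'I_k.+1| <= #|[pred x | x \in codom s]|.
  apply: subset_leq_card; apply/subsetP => x _; have := H x; by rewrite negbK.
rewrite card_ord => /leq_trans /(_ (card_size _)); by rewrite size_codom card_ord ltnn.
Qed.

Lemma inj_upd D n (ta : 'I_n -> tsym D) r a :
  injective ta -> fresh ta a -> injective (upd ta r a).
Proof.
move=> Hi Hf x y; rewrite /upd.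
case: (eqVneq x r) => [->|xr]; case: (eqVneq y r) => [->|yr] //.
- by move=> E; case: (Hf y); rewrite E.
- by move=> E; case: (Hf x).
- exact: Hi.
Qed.

Section Sim.
Variables (D : Type) (k : nat) (Q : finType) (B : RA D k Q).
Definition SG := {ffun 'I_k -> 'I_k.+1}.
Definition QA : finType := (Q * {ffun 'I_k -> 'I_k.+1})%type.
Definition setf (s : SG) (j : 'I_k) (r : 'I_k.+1) : SG :=
  [ffun l => if l == j then r else s l].

Definition gen (t : trans k Q) (s : SG) (r : 'I_k.+1) : seq (trans k.+1 QA) :=
  match t with
  | TEq i q0 q1 d => [:: TEq (s i) ((q0, s) : QA) (q1, s) d]
  | TEqStore i q0 q1 j d => [:: TEq (s i) ((q0, s) : QA) (q1, setf s j (s i)) d]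
  | TNew q0 q1 j d => if r \notin codom s then
       [:: TNew ((q0, s) : QA) (q1, setf s j r) r d; TEq r ((q0, s) : QA) (q1, setf s j r) d]
       else [::]
  | TNewSkip q0 q1 d => if r \notin codom s then
       [:: TNew ((q0, s) : QA) (q1, s) r d; TEq r ((q0, s) : QA) (q1, s) d]
       else [::]
  end.

Definition transA : seq (trans k.+1 QA) :=
  flat_map (fun t => flat_map (fun s => flat_map (fun r => gen t s r)
     (enum 'I_k.+1)) (enum {ffun 'I_k -> 'I_k.+1})) (trans_set B).

Definition RA_A (f0 : 'I_k.+1 -> tsym D) (s0 : SG) : RA D k.+1 QA :=
  mkRA ((q_init B, s0) : QA) (fun c : QA => final B c.1) f0 transA.

Definition Rel (cB : conf D k Q) (cA : conf D k.+1 QA) : Prop :=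
  cA.1.1.1 = cB.1.1 /\ cA.1.2 = cB.1.2 /\ injective cA.2 /\
  forall l, cB.2 l = cA.2 (cA.1.1.2 l).

Lemma InA t s r tA : In t (trans_set B) -> In tA (gen t s r) -> In tA transA.
Proof.
move=> H1 H2; apply/in_flat_map; exists t; split => //.
apply/in_flat_map; exists s; split; first by apply: memIn; rewrite mem_enum.
apply/in_flat_map; exists r; split => //; by apply: memIn; rewrite mem_enum.
Qed.

Lemma InA_inv tA : In tA transA -> exists t s r, In t (trans_set B) /\ In tA (gen t s r).
Proof.
move/in_flat_map => [t [H1 /in_flat_map [s [_ /in_flat_map [r [_ H]]]]]].
by exists t, s, r.
Qed.

Lemma notin_codom (s : SG) r l : r \notin codom s -> s l <> r.
Proof. by move=> H E; move: H; rewrite -E codom_f. Qed.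

Lemma fresh_dec n (ta : 'I_n -> tsym D) a : fresh ta a \/ exists g, ta g = a.
Proof.
case: (classic (exists g, ta g = a)); auto.
by move=> H; left => g E; apply: H; exists g.
Qed.

Variables (f0 : 'I_k.+1 -> tsym D) (s0 : SG) (w : seq D).

Lemma sim_fwd x y cA : step B w x y -> Rel x cA ->
  exists cA', step (RA_A f0 s0) w cA cA' /\ Rel y cA'.
Proof.
case: x => [[q p] tb]; case: cA => [[[q' s] p'] ta] Hst [/= Eq [Ep [Hinj Hrel]]].
subst q' p'.
case: Hst => t [Hin Hf]; move: Hf; case: y => [[q2 p2] tb2].
case: t Hin => [i q0 q1 d | q0 q1 j d | i q0 q1 j d | q0 q1 d] Hin /=.
- move=> [-> [Ha [-> [Hm ->]]]].
  exists ((q1, s) : QA, p2, ta); split; last by split.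
  exists (TEq (s i) ((q0, s) : QA) (q1, s) d); split.
    by apply: (InA (s := s) (r := ord0) Hin); left.
  by rewrite /= -Hrel.
- move=> [-> [Hfr [-> [Hm ->]]]].
  case: (fresh_dec ta (tape_at w p)) => [Hf|[g Hg]].
  + have [r Hr] := free_reg s.
    exists ((q1, setf s j r) : QA, p2, upd ta r (tape_at w p)); split.
      exists (TNew ((q0, s) : QA) (q1, setf s j r) r d); split.
        by apply: (InA (s := s) (r := r) Hin); rewrite /= Hr; left.
      by [].
    split => //; split => //; split; first exact: inj_upd.
    move=> l /=; rewrite /upd ffunE; case: eqP => [_|_]; first by rewrite eqxx.
    rewrite ifN_eq; [exact: Hrel | apply/eqP; exact: notin_codom Hr].
  + have Hr : g \notin codom s.
      apply/negP => /codomP [l El]; apply: (Hfr l); by rewrite Hrel -El.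
    exists ((q1, setf s j g) : QA, p2, ta); split.
      exists (TEq g ((q0, s) : QA) (q1, setf s j g) d); split.
        by apply: (InA (s := s) (r := g) Hin); rewrite /= Hr; right; left.
      by [].
    split => //; split => //; split => //.
    move=> l /=; rewrite /upd ffunE; case: eqP => [_|_]; [by rewrite Hg | exact: Hrel].
- move=> [-> [Ha [-> [Hm ->]]]].
  exists ((q1, setf s j (s i)) : QA, p2, ta); split.
    exists (TEq (s i) ((q0, s) : QA) (q1, setf s j (s i)) d); split.
      by apply: (InA (s := s) (r := ord0) Hin); left.
    by rewrite /= -Hrel.
  split => //; split => //; split => //.
  move=> l /=; rewrite /upd ffunE; case: eqP => // _; by rewrite -Hrel.
- move=> [-> [Hfr [-> [Hm ->]]]].
  case: (fresh_dec ta (tape_at w p)) => [Hf|[g Hg]].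
  + have [r Hr] := free_reg s.
    exists ((q1, s) : QA, p2, upd ta r (tape_at w p)); split.
      exists (TNew ((q0, s) : QA) (q1, s) r d); split.
        by apply: (InA (s := s) (r := r) Hin); rewrite /= Hr; left.
      by [].
    split => //; split => //; split; first exact: inj_upd.
    move=> l /=; rewrite /upd.
    rewrite ifN_eq; [exact: Hrel | apply/eqP; exact: notin_codom Hr].
  + have Hr : g \notin codom s.
      apply/negP => /codomP [l El]; apply: (Hfr l); by rewrite Hrel -El.
    exists ((q1, s) : QA, p2, ta); split.
      exists (TEq g ((q0, s) : QA) (q1, s) d); split.
        by apply: (InA (s := s) (r := g) Hin); rewrite /= Hr; right; left.
      by [].
    by [].
Qed.

Lemma sim_bwd x cA cA' : step (RA_A f0 s0) w cA cA' -> Rel x cA ->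
  exists y, step B w x y /\ Rel y cA'.
Proof.
case: x => [[q p] tb]; case: cA => [[[q' s] p'] ta] Hst [/= Eq [Ep [Hinj Hrel]]].
subst q' p'.
case: Hst => tA [/InA_inv [t [s1 [r [Hin Hg]]]] Hf]; move: Hf.
case: cA' => [[[q2 s2] p2] ta2].
case: t Hin Hg => [i q0 q1 d | q0 q1 j d | i q0 q1 j d | q0 q1 d] Hin /=.
- case=> // <-; rewrite /= => -[[E1 E2] [Ha [[E3 E4] [Hm E5]]]]; subst.
  exists (q1, p2, tb); split; last by split.
  exists (TEq i q0 q1 d); split => //=; by rewrite Hrel.
- case: ifP => // Hr; case=> [<-|[<-|//]]; rewrite /= => -[[E1 E2] [Ha [[E3 E4] [Hm E5]]]]; subst.
  + exists (q1, p2, upd tb j (tape_at w p)); split.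
      exists (TNew q0 q1 j d); split => //=; split => //; split => //.
      by move=> l; rewrite Hrel.
    split => //; split => //; split; first exact: inj_upd.
    move=> l /=; rewrite /upd ffunE; case: eqP => [_|_]; first by rewrite eqxx.
    rewrite ifN_eq; [exact: Hrel | apply/eqP; exact: notin_codom Hr].
  + exists (q1, p2, upd tb j (tape_at w p)); split.
      exists (TNew q0 q1 j d); split => //=; split => //; split => //.
      move=> l; rewrite Hrel -Ha => /Hinj E; move: Hr; by rewrite -E codom_f.
    split => //; split => //; split => //.
    move=> l /=; rewrite /upd ffunE; case: eqP => [_|_]; [by rewrite Ha | exact: Hrel].
- case=> // <-; rewrite /= => -[[E1 E2] [Ha [[E3 E4] [Hm E5]]]]; subst.
  exists (q1, p2, upd tb j (tape_at w p)); split.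
    exists (TEqStore i q0 q1 j d); split => //=; by rewrite Hrel.
  split => //; split => //; split => //.
  move=> l /=; rewrite /upd ffunE; case: eqP => [_|_]; [by [] | exact: Hrel].
- case: ifP => // Hr; case=> [<-|[<-|//]]; rewrite /= => -[[E1 E2] [Ha [[E3 E4] [Hm E5]]]]; subst.
  + exists (q1, p2, tb); split.
      exists (@TNewSkip k Q q0 q1 d); split => //=; split => //; split => //.
      by move=> l; rewrite Hrel.
    split => //; split => //; split; first exact: inj_upd.
    move=> l /=; rewrite /upd.
    rewrite ifN_eq; [exact: Hrel | apply/eqP; exact: notin_codom Hr].
  + exists (q1, p2, tb); split.
      exists (@TNewSkip k Q q0 q1 d); split => //=; split => //; split => //.
      move=> l; rewrite Hrel -Ha => /Hinj E; move: Hr; by rewrite -E codom_f.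
    by [].
Qed.

Lemma rt_fwd x y : clos_refl_trans _ (step B w) x y -> forall cA, Rel x cA ->
  exists cA', clos_refl_trans _ (step (RA_A f0 s0) w) cA cA' /\ Rel y cA'.
Proof.
elim=> {x y} [x y H|x|x y z _ IH1 _ IH2] cA HR.
- have [cA' [H1 H2]] := sim_fwd H HR; exists cA'; split => //; exact: rt_step.
- exists cA; split => //; exact: rt_refl.
- have [c1 [H1 H2]] := IH1 _ HR; have [c2 [H3 H4]] := IH2 _ H2.
  exists c2; split => //; exact: rt_trans H3.
Qed.

Lemma rt_bwd cA cA' : clos_refl_trans _ (step (RA_A f0 s0) w) cA cA' -> forall x, Rel x cA ->
  exists y, clos_refl_trans _ (step B w) x y /\ Rel y cA'.
Proof.
elim=> {cA cA'} [x y H|x|x y z _ IH1 _ IH2] cB HR.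
- have [cA' [H1 H2]] := sim_bwd H HR; exists cA'; split => //; exact: rt_step.
- exists cB; split => //; exact: rt_refl.
- have [c1 [H1 H2]] := IH1 _ HR; have [c2 [H3 H4]] := IH2 _ H2.
  exists c2; split => //; exact: rt_trans H3.
Qed.
End Sim.

Theorem lemma1 (D : Type) (HD : infinite_alphabet D) (L : seq D -> Prop) :
  (exists (k : nat) (Q : finType) (A : RA D k Q),
      original A /\ forall w, L w <-> accepts A w)
  <->
  (exists (k' : nat) (Q : finType) (B : RA D k' Q),
      forall w, L w <-> accepts B w).
Proof.
split.
- move=> [k [Q [A [_ H]]]]; by exists k, Q, A.
- move=> [k [Q [B H]]].
  have [f0 [s1 [Hi Hs]]] := init_ex HD (tau_init B).
  exists k.+1, _, (RA_A B f0 (finfun s1)); split.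
    rewrite /original /=.
    have allIn : forall (T : Type) (P : pred T) (s : seq T),
        (forall t, In t s -> P t) -> all P s.
      move=> T P; elim=> //= a s IH Hx; apply/andP; split; [by apply: Hx; left | apply: IH => t Ht; apply: Hx; by right].
    apply: allIn => tA /InA_inv [t [s [r [_ Hg]]]].
    case: t Hg => [i q0 q1 d | q0 q1 j d | i q0 q1 j d | q0 q1 d] /=.
    - by move=> [<-|[]].
    - by case: ifP => _ //; move=> [<-|[<-|[]]].
    - by move=> [<-|[]].
    - by case: ifP => _ //; move=> [<-|[<-|[]]].
  move=> w.
  have HR : Rel (q_init B, 1, tau_init B) (q_init (RA_A B f0 (finfun s1)), 1, f0).
    split => //; split => //; split => // l /=; by rewrite ffunE.
  rewrite H; split.
  + move=> [c [Hc Hfin]].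
    have [cA [H1 [H2 _]]] := @rt_fwd _ _ _ B f0 (finfun s1) w _ _ Hc _ HR.
    exists cA; split => //=; by rewrite H2.
  + move=> [cA [Hc Hfin]].
    have [c [H1 [H2 _]]] := rt_bwd Hc HR.
    exists c; split => //; by rewrite -H2.
Qed.
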